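(* The $\Sigma_1$-theory $\mathcal{T}_\varsigma$ is stably finite, and thus has the finite model property, with respect to $\{\sigma\}$.
   Context: $\varsigma:\mathbb{N}\to\mathbb{N}$ is the Busy Beaver function: $\varsigma(n)$ is the maximum number of $1$'s that a halting Turing machine with at most $n$ states can leave on its tape, starting from an all-$0$ tape. $\Sigma_1$ is the empty signature (only equality, interpreted as identity) with one sort $\sigma$. Let $\psi_{\ge n}=\exists x_1\dots x_n.\bigwedge_{1\le i<j\le n}\neg(x_i=x_j)$, $\psi_{\le n}=\exists x_1\dots x_n\forall y.\bigvee_{i=1}^n y=x_i$, $\psi_{=n}=\psi_{\ge n}\wedge\psi_{\le n}$. $\mathcal{T}_\varsigma$ is the $\Sigma_1$-theory (class of all $\Sigma_1$-interpretations satisfying the axioms) axiomatized by $\{\psi_{\ge\varsigma(k+2)}\vee\bigvee_{i=2}^{k+2}\psi_{=\varsigma(i)}:k\in\mathbb{N}\}$. A theory $\mathcal{T}$ is stably finite w.r.t. $\{\sigma\}$ if for every quantifier-free $\phi$ and $\mathcal{T}$-interpretation $\mathcal{A}$ satisfying $\phi$ there is a $\mathcal{T}$-interpretation $\mathcal{B}$ satisfying $\phi$ with $|\sigma^{\mathcal{B}}|$ finite and $|\sigma^{\mathcal{B}}|\le|\sigma^{\mathcal{A}}|$. It has the finite model property w.r.t. $\{\sigma\}$ if every quantifier-free formula satisfied by some $\mathcal{T}$-interpretation is satisfied by some $\mathcal{T}$-interpretation with finite domain. *)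

(* Defs.v *)
From Stdlib Require Import ZArith List Arith ClassicalEpsilon.
Import ListNotations.

(* A 2-symbol (0 = false, 1 = true) Turing machine with states 0..n-1,
   start state 0, on a bi-infinite tape.  [delta q b = (w, r, q')]:
   write w, move right if r (left otherwise), go to state q'
   (None = halt). *)
Record TM := { tm_delta : nat -> bool -> bool * bool * option nat }.

Definition tm_states_le (n : nat) (M : TM) : Prop :=
  0 < n /\
  forall q b, q < n ->
    match tm_delta M q b with
    | (_, _, Some q') => q' < n
    | (_, _, None) => True
    end.

Definition config := (option nat * (Z -> bool) * Z)%type.

Definition tm_init : config := (Some 0, fun _ => false, 0%Z).

Definition tm_step (M : TM) (c : config) : config :=
  match c with
  | (None, tape, h) => (None, tape, h)
  | (Some q, tape, h) =>
      match tm_delta M q (tape h) with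
      | (w, r, q') =>
          (q', (fun z => if Z.eqb z h then w else tape z),
           if r then (h + 1)%Z else (h - 1)%Z)
      end
  end.

Fixpoint tm_run (M : TM) (t : nat) : config :=
  match t with
  | 0 => tm_init
  | S t' => tm_step M (tm_run M t')
  end.

(* Number of 1's on the tape in the window [-t, t]; after t steps
   the tape is blank outside [-(t-1), t-1]. *)
Definition ones_in_window (tape : Z -> bool) (t : nat) : nat :=
  length (filter (fun i => tape (Z.of_nat i - Z.of_nat t)%Z) (seq 0 (2 * t + 1))).

Definition tm_halts_with (M : TM) (c : nat) : Prop :=
  exists t tape h, tm_run M t = (None, tape, h) /\ c = ones_in_window tape t.

Definition BB_spec (n m : nat) : Prop :=
  (m = 0 \/ exists M, tm_states_le n M /\ tm_halts_with M m) /\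
  (forall M c, tm_states_le n M -> tm_halts_with M c -> c <= m).

Definition busy_beaver (n : nat) : nat :=
  epsilon (inhabits 0) (BB_spec n).

(* A Sigma_1-interpretation: a domain for sort sigma and an assignment
   of the variables x_0, x_1, ... (hence the domain is nonempty). *)
Record interp := { dom : Type; assign : nat -> dom }.

Inductive qf : Type :=
| QTrue | QFalse
| QEq (i j : nat)
| QNot (p : qf)
| QAnd (p q : qf)
| QOr (p q : qf)
| QImp (p q : qf).

Fixpoint qf_sat (A : interp) (p : qf) : Prop :=
  match p with
  | QTrue => True
  | QFalse => False
  | QEq i j => assign A i = assign A j
  | QNot p => ~ qf_sat A p
  | QAnd p q => qf_sat A p /\ qf_sat A q
  | QOr p q => qf_sat A p \/ qf_sat A q
  | QImp p q => qf_sat A p -> qf_sat A q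
  end.

Definition psi_ge (n : nat) (D : Type) : Prop :=
  exists x : nat -> D, forall i j, i < n -> j < n -> i <> j -> x i <> x j.
Definition psi_le (n : nat) (D : Type) : Prop :=
  exists x : nat -> D, forall y : D, exists i, i < n /\ y = x i.
Definition psi_eq (n : nat) (D : Type) : Prop := psi_ge n D /\ psi_le n D.

(* A theory = class of interpretations, given by a condition on the
   domain (all axioms are sentences). *)
Definition T_varsigma (D : Type) : Prop :=
  forall k : nat,
    psi_ge (busy_beaver (k + 2)) D \/
    exists i, 2 <= i <= k + 2 /\ psi_eq (busy_beaver i) D.

Definition finite_type (D : Type) : Prop :=
  exists l : list D, forall x : D, In x l.

Definition card_le (D1 D2 : Type) : Prop :=
  exists f : D1 -> D2, forall x y, f x = f y -> x = y.

Definition stably_finite (T : Type -> Prop) : Prop :=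
  forall (phi : qf) (A : interp), T (dom A) -> qf_sat A phi ->
    exists B : interp, T (dom B) /\ qf_sat B phi /\
      finite_type (dom B) /\ card_le (dom B) (dom A).

Definition finite_model_property (T : Type -> Prop) : Prop :=
  forall (phi : qf) (A : interp), T (dom A) -> qf_sat A phi ->
    exists B : interp, T (dom B) /\ qf_sat B phi /\ finite_type (dom B).

(* Main.v *)
Require Import Defs.
From Stdlib Require Import ZArith List Arith Lia Classical ClassicalEpsilon ProofIrrelevance.
Import ListNotations.

Fixpoint vb (p : qf) : nat :=
  match p with
  | QTrue | QFalse => 0
  | QEq i j => max (S i) (S j)
  | QNot p => vb p
  | QAnd p q | QOr p q | QImp p q => max (vb p) (vb q)
  end.

Lemma qf_transfer (A B : interp) (m : nat) :
  (forall i j, i < m -> j < m -> (assign B i = assign B j <-> assign A i = assign A j)) ->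
  forall p, vb p <= m -> (qf_sat B p <-> qf_sat A p).
Proof.
  intros H p; induction p; simpl; intros Hv.
  - tauto.
  - tauto.
  - apply H; lia.
  - rewrite IHp by lia; tauto.
  - rewrite IHp1, IHp2 by lia; tauto.
  - rewrite IHp1, IHp2 by lia; tauto.
  - rewrite IHp1, IHp2 by lia; tauto.
Qed.

Lemma min_exists (P : nat -> Prop) n : P n -> exists k, P k /\ forall k', k' < k -> ~ P k'.
Proof.
  induction n as [n IH] using lt_wf_ind; intros Hn.
  destruct (classic (exists k', k' < n /\ P k')) as [[k' [Hk Pk]]|Hno].
  - exact (IH k' Hk Pk).
  - exists n; split; auto. intros k' Hk Pk. apply Hno; eauto.
Qed.

Definition Dn (s : nat) := {k : nat | k < s}.

Lemma sig_ext s (y y' : Dn s) : proj1_sig y = proj1_sig y' -> y = y'.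
Proof.
  destruct y, y'; simpl; intros; subst; f_equal; apply proof_irrelevance.
Qed.

Definition to_dom (s : nat) (H0 : 0 < s) (k : nat) : Dn s :=
  match lt_dec k s with
  | left p => exist _ k p
  | right _ => exist _ 0 H0
  end.

Lemma to_dom_val s (H0 : 0 < s) k : k < s -> proj1_sig (to_dom s H0 k) = k.
Proof. intros; unfold to_dom; destruct lt_dec; simpl; lia. Qed.

Lemma psi_ge_fin s (H0 : 0 < s) n : n <= s -> psi_ge n (Dn s).
Proof.
  intros Hn; exists (to_dom s H0); intros i j Hi Hj Hij E.
  apply Hij. rewrite <- (to_dom_val s H0 i), <- (to_dom_val s H0 j) by lia.
  now rewrite E.
Qed.

Lemma psi_le_fin s (H0 : 0 < s) : psi_le s (Dn s).
Proof.
  exists (to_dom s H0); intros y. exists (proj1_sig y). split.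
  - exact (proj2_sig y).
  - apply sig_ext. rewrite to_dom_val; auto. exact (proj2_sig y).
Qed.

Lemma fin_fin s (H0 : 0 < s) : finite_type (Dn s).
Proof.
  exists (map (to_dom s H0) (seq 0 s)). intros y.
  assert (y = to_dom s H0 (proj1_sig y)) as E.
  { apply sig_ext. rewrite to_dom_val; auto. exact (proj2_sig y). }
  rewrite E. apply in_map. apply in_seq. pose proof (proj2_sig y) as Hy. simpl in Hy. lia.
Qed.

Lemma inf_lists (X : Type) : ~ finite_type X -> forall n, exists l : list X, length l = n /\ NoDup l.
Proof.
  intros Hf n; induction n as [|n [l [Hl Hd]]].
  - exists []; split; auto; constructor.
  - assert (exists x, ~ In x l) as [x Hx].
    { apply not_all_ex_not. intro H; apply Hf; exists l; auto. }
    exists (x :: l); split; simpl; auto. constructor; auto.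
Qed.

Lemma card_fin (X : Type) (d : X) s : ~ finite_type X -> card_le (Dn s) X.
Proof.
  intros Hf. destruct (inf_lists X Hf s) as [l [Hl Hd]].
  exists (fun y => nth (proj1_sig y) l d). intros y y' E.
  apply sig_ext. rewrite NoDup_nth in Hd. apply (Hd _ _ ).
  rewrite Hl; exact (proj2_sig y). rewrite Hl; exact (proj2_sig y'). exact E.
Qed.

Lemma T_fin s (H0 : 0 < s) :
  (forall k, busy_beaver (k + 2) <= s \/ exists i, 2 <= i <= k + 2 /\ busy_beaver i = s) ->
  T_varsigma (Dn s).
Proof.
  intros H k. destruct (H k) as [Hk|[i [Hi E]]].
  - left; now apply psi_ge_fin.
  - right; exists i; split; auto. rewrite E; split.
    + now apply psi_ge_fin.
    + now apply psi_le_fin.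
Qed.

Lemma good_size (M : nat) : 0 < M -> exists s, M <= s /\
  (forall k, busy_beaver (k + 2) <= s \/ exists i, 2 <= i <= k + 2 /\ busy_beaver i = s).
Proof.
  intros HM.
  destruct (classic (exists i, 2 <= i /\ M <= busy_beaver i)) as [[i Hi]|Hno].
  - destruct (min_exists (fun i => 2 <= i /\ M <= busy_beaver i) i Hi) as [i0 [[H2 HM0] Hmin]].
    exists (busy_beaver i0); split; auto. intros k.
    destruct (le_lt_dec i0 (k + 2)).
    + right; exists i0; split; auto; lia.
    + left. assert (~ (2 <= k + 2 /\ M <= busy_beaver (k + 2))) by (apply Hmin; lia). lia.
  - exists M; split; auto. intros k; left.
    assert (~ (2 <= k + 2 /\ M <= busy_beaver (k + 2))) by (intro; apply Hno; eauto). lia.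
Qed.

Lemma stab : stably_finite T_varsigma.
Proof.
  intros phi A HT Hs.
  destruct (classic (finite_type (dom A))) as [Hf|Hinf].
  { exists A; repeat split; auto. exists (fun x => x); auto. }
  set (m := S (vb phi)).
  destruct (good_size m ltac:(unfold m; lia)) as [s [Hms Hsz]].
  assert (H0 : 0 < s) by (unfold m in *; lia).
  set (a := assign A).
  set (Pm := fun j k => a k = a j /\ forall k', k' < k -> a k' <> a j).
  set (f := fun j => epsilon (inhabits 0) (Pm j)).
  assert (Hf : forall j, Pm j (f j)).
  { intro j. apply epsilon_spec. apply (min_exists (fun k => a k = a j) j). reflexivity. }
  assert (Hfle : forall j, f j <= j).
  { intro j. destruct (Hf j) as [_ Hm]. destruct (le_lt_dec (f j) j); auto.
    exfalso; apply (Hm j); auto. }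
  assert (Hfeq : forall i j, f i = f j <-> a i = a j).
  { intros i j; split.
    - intro E. destruct (Hf i) as [Ei _], (Hf j) as [Ej _]. rewrite <- Ei, <- Ej, E; auto.
    - intro E. unfold f, Pm. rewrite E. reflexivity. }
  set (B := {| dom := Dn s; assign := fun j => to_dom s H0 (f j) |}).
  exists B; split; [|split; [|split]].
  - now apply T_fin.
  - refine (proj2 (qf_transfer A B m _ phi _) Hs); [|unfold m; lia].
    intros i j Hi Hj; simpl. change (assign A i = assign A j) with (a i = a j). rewrite <- Hfeq. split.
    + intro E. rewrite <- (to_dom_val s H0 (f i)), <- (to_dom_val s H0 (f j)), E; auto.
      all: pose proof (Hfle i); pose proof (Hfle j); lia.
    + intro E; now rewrite E.

  - exact (fin_fin s H0).
  - exact (card_fin _ (assign A 0) s Hinf).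
Qed.

Theorem lemma52 :
  stably_finite T_varsigma /\ finite_model_property T_varsigma.
Proof.
  split; [apply stab|].
  intros phi A HT Hs. destruct (stab phi A HT Hs) as [B [H1 [H2 [H3 _]]]].
  exists B; auto.
Qed.
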